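(* Let $t\in\mathbb{R}$ and let $M\in\mathrm{SU}(2,1)$. Suppose that $M$ maps the boundary points $\infty=[1:0:0]$, $0=[0:0:1]$ and $(1,t)=[-\tfrac12+\tfrac{it}{2}:1:1]$ to boundary points with lifts of the form ${}^t(w_{j1},w_{j2},1)$, $j=0,1,2$ (one for each image point). Let $K=\mathbb{Q}(it, w_{jk},\overline{w_{jk}} : j=0,1,2,\ k=1,2)$. Then $M^3\in\mathrm{SU}(2,1,K)$, i.e. all entries of $M^3$ lie in $K$.
   Context: $\mathrm{SU}(2,1)$ is the group of complex $3\times 3$ matrices of determinant $1$ preserving the Hermitian form $\langle z,w\rangle = z_1\overline{w_3}+z_2\overline{w_2}+z_3\overline{w_1}$ on $\mathbb{C}^3$, acting projectively on the boundary of complex hyperbolic plane, namely the projectivization of $\{z\neq0:\langle z,z\rangle=0\}$. For a field $K$, $\mathrm{SU}(2,1,K)$ is the set of elements of $\mathrm{SU}(2,1)$ with all entries in $K$. *)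

(* Defs.v *)
From HB Require Import structures.
From mathcomp Require Import all_boot all_order all_algebra.
From mathcomp Require Import complex.
From mathcomp Require Import reals.
Set Implicit Arguments. Unset Strict Implicit. Unset Printing Implicit Defensive.
Import Order.TTheory GRing.Theory Num.Theory.
Local Open Scope ring_scope.
Local Open Scope complex_scope.

Section Defs.
Variable R : realType.
Local Notation C := R[i].

Definition i0 : 'I_3 := @Ordinal 3 0 isT.
Definition i1 : 'I_3 := @Ordinal 3 1 isT.
Definition i2 : 'I_3 := @Ordinal 3 2 isT.

Definition vec3 (a b c : C) : 'cV[C]_3 :=
  \col_(k < 3) (if k == i0 then a else if k == i1 then b else c).

Definition hform (z w : 'cV[C]_3) : C :=
  z i0 0 * (w i2 0)^* + z i1 0 * (w i1 0)^* + z i2 0 * (w i0 0)^*.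

Definition SU21 (M : 'M[C]_3) : Prop :=
  \det M = 1 /\ forall z w : 'cV[C]_3, hform (M *m z) (M *m w) = hform z w.

(* membership in the subfield of C generated by the set G (over Q, i.e. the
   smallest subfield of C containing G) *)
Definition subfield_closed (S : C -> Prop) : Prop :=
  S 0 /\ S 1 /\
  (forall x y, S x -> S y -> S (x + y)) /\
  (forall x, S x -> S (- x)) /\
  (forall x y, S x -> S y -> S (x * y)) /\
  (forall x, S x -> S (x^-1)).

Definition in_gen_field (G : C -> Prop) (z : C) : Prop :=
  forall S, subfield_closed S -> (forall g, G g -> S g) -> S z.

Definition bpt (t : R) (j : 'I_3) : 'cV[C]_3 :=
  if j == i0 then vec3 1 0 0
  else if j == i1 then vec3 0 0 1
  else vec3 (- 2^-1 + 'i * t%:C / 2) 1 1.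

Definition is_lift (v : 'cV[C]_3) (a b : C) : Prop :=
  exists lam : C, lam != 0 /\ v = lam *: vec3 a b 1.

Definition gensK (t : R) (w1 w2 : 'I_3 -> C) (g : C) : Prop :=
  g = 'i * t%:C \/
  exists j : 'I_3, [\/ g = w1 j, g = w2 j, g = (w1 j)^* | g = (w2 j)^*].

End Defs.

(* Main.v *)
Require Import Defs.
From HB Require Import structures.
From mathcomp Require Import all_boot all_order all_algebra.
From mathcomp Require Import complex.
From mathcomp Require Import reals.
From mathcomp Require Import ring.
Import Order.TTheory GRing.Theory Num.Theory.
Local Open Scope ring_scope.
Local Open Scope complex_scope.
Notation cj := (@Num.conj _).
Section C.
Context (R : realType).
Lemma cM (x y : R[i]) : cj (x * y) = cj x * cj y. Proof. exact: rmorphM. Qed.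
Lemma cD (x y : R[i]) : cj (x + y) = cj x + cj y. Proof. exact: rmorphD. Qed.
Lemma cN (x : R[i]) : cj (- x) = - cj x. Proof. exact: rmorphN. Qed.
Lemma cV (x : R[i]) : cj (x^-1) = (cj x)^-1. Proof. exact: fmorphV. Qed.
Lemma cn n : cj (n%:R : R[i]) = n%:R. Proof. exact: rmorph_nat. Qed.
Lemma c1 : cj (1 : R[i]) = 1. Proof. exact: rmorph1. Qed.
Lemma c0 : cj (0 : R[i]) = 0. Proof. exact: rmorph0. Qed.
Lemma cK (x : R[i]) : cj (cj x) = x. Proof. exact: conjCK. Qed.
Lemma ci : cj ('i%R : R[i]) = - 'i%R.
Proof. exact: conjCi. Qed.
Lemma cr (t : R) : cj (t%:C) = t%:C.
Proof. exact: conjc_real. Qed.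
End C.
Lemma cc (R : realType) (t : R) : cj (- 2^-1 + 'i * t%:C / 2) = - 2^-1 - 'i * t%:C / 2.
Proof. rewrite cD cN !cM !cV cn ci cr. ring. Qed.
Lemma b12 (R : realType) (t : R) : hform (bpt t i1) (bpt t i2) = - 2^-1 - 'i * t%:C / 2.
Proof. rewrite /hform /bpt !mxE /= c1 cc. ring. Qed.
Lemma b01 (R : realType) (t : R) : hform (bpt t i0) (bpt t i1) = 1.
Proof. rewrite /hform /bpt /= !mxE /= ?c0 c1. ring. Qed.
Lemma b02 (R : realType) (t : R) : hform (bpt t i0) (bpt t i2) = 1.
Proof. rewrite /hform /bpt /= !mxE /= ?c0 c1. ring. Qed.
Lemma hv (R : realType) (l m a b a' b' : R[i]) :
  hform (l *: vec3 a b 1) (m *: vec3 a' b' 1) = l * cj m * (a + b * cj b' + cj a').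
Proof. rewrite /hform !mxE /= !cM c1. ring. Qed.
Lemma v3 (R : realType) (M : 'M[R[i]]_3) a b c r :
  (M *m vec3 a b c) r 0 = M r i0 * a + M r i1 * b + M r i2 * c.
Proof. rewrite mxE !big_ord_recl big_ord0 !mxE /=.
have -> : lift ord0 ord0 = i1 :> 'I_3 by apply/val_inj.
have -> : lift ord0 (lift ord0 ord0) = i2 :> 'I_3 by apply/val_inj.
have -> : ord0 = i0 :> 'I_3 by apply/val_inj.
by rewrite addr0 addrA. Qed.

Lemma ord3 (j : 'I_3) : j = i0 \/ j = i1 \/ j = i2.
Proof.
case: j => [[|[|[|n]]] Hj].
- by left; apply/val_inj.
- by right; left; apply/val_inj.
- by right; right; apply/val_inj.
- by [].
Qed.

Section S.
Context {R : realType} {S : R[i] -> Prop} (HS : subfield_closed S).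

Lemma S0 : S 0. Proof. move: HS => [h0 [h1 [hD [hN [hM hV]]]]]; exact: h0. Qed.
Lemma S1 : S 1. Proof. move: HS => [h0 [h1 [hD [hN [hM hV]]]]]; exact: h1. Qed.
Lemma SD {x y} : S x -> S y -> S (x + y). Proof. move: HS => [h0 [h1 [hD [hN [hM hV]]]]]; exact: hD. Qed.
Lemma SN {x} : S x -> S (- x). Proof. move: HS => [h0 [h1 [hD [hN [hM hV]]]]]; exact: hN. Qed.
Lemma SM {x y} : S x -> S y -> S (x * y). Proof. move: HS => [h0 [h1 [hD [hN [hM hV]]]]]; exact: hM. Qed.
Lemma SV {x} : S x -> S (x^-1). Proof. move: HS => [h0 [h1 [hD [hN [hM hV]]]]]; exact: hV. Qed.
Lemma SB {x y} : S x -> S y -> S (x - y). Proof. by move=> *; apply: SD => //; apply: SN. Qed.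
Lemma SQ {x y} : S x -> S y -> S (x / y). Proof. by move=> *; apply: SM => //; apply: SV. Qed.
Lemma S2 : S 2. Proof. have -> : (2 : R[i]) = 1 + 1 by ring. by apply: SD; apply: S1. Qed.

Lemma S_sum (I : Type) (r : seq I) (P : pred I) (F : I -> R[i]) :
  (forall i, P i -> S (F i)) -> S (\sum_(i <- r | P i) F i).
Proof. move=> H; apply: big_ind => //; [exact: S0 | move=> ? ?; exact: SD]. Qed.
Lemma S_prod (I : Type) (r : seq I) (P : pred I) (F : I -> R[i]) :
  (forall i, P i -> S (F i)) -> S (\prod_(i <- r | P i) F i).
Proof. move=> H; apply: big_ind => //; [exact: S1 | move=> ? ?; exact: SM]. Qed.

Lemma S_mulmx n m p (A : 'M[R[i]]_(n, m)) (B : 'M[R[i]]_(m, p)) :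
  (forall i j, S (A i j)) -> (forall i j, S (B i j)) -> forall i j, S ((A *m B) i j).
Proof. move=> HA HB i j; rewrite mxE; apply: S_sum => k _; exact: SM. Qed.

Lemma S_exp n (A : 'M[R[i]]_n) k :
  (forall i j, S (A i j)) -> forall i j, S ((A ^+ k) i j).
Proof.
move=> HA; elim: k => [|k IH] i j.
  rewrite expr0 mxE; case: (i == j); [exact: S1 | exact: S0].
by rewrite exprS -mulmxE; apply: S_mulmx.
Qed.

Lemma S_det n (A : 'M[R[i]]_n) : (forall i j, S (A i j)) -> S (\det A).
Proof.
move=> HA; rewrite /determinant; apply: S_sum => s _; apply: SM.
  by case: (perm.odd_perm s); rewrite ?expr0 ?expr1; [apply: SN; exact: S1 | exact: S1].
by apply: S_prod => i _.
Qed.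

Lemma S_vec3 a b c r : S a -> S b -> S c -> S (vec3 a b c r 0).
Proof. by move=> ? ? ?; rewrite mxE; case: ifP => _ //; case: ifP. Qed.
End S.

Theorem mainTheorem4 (R : realType) (t : R) (M : 'M[R[i]]_3)
    (w1 w2 : 'I_3 -> R[i]) :
  SU21 M ->
  (forall j : 'I_3, is_lift (M *m bpt t j) (w1 j) (w2 j)) ->
  forall r c : 'I_3, in_gen_field (gensK t w1 w2) ((M ^+ 3) r c).
Proof.
move=> [detM HM] Hl r c S HS Hg.
have Sw1 j : S (w1 j) by apply: Hg; right; exists j; apply: Or41.
have Sw2 j : S (w2 j) by apply: Hg; right; exists j; apply: Or42.
have Sw1c j : S (cj (w1 j)) by apply: Hg; right; exists j; apply: Or43.
have Sw2c j : S (cj (w2 j)) by apply: Hg; right; exists j; apply: Or44.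
have Sit : S ('i * t%:C) by apply: Hg; left.
set cp : R[i] := - 2^-1 + 'i * t%:C / 2.
set cm : R[i] := - 2^-1 - 'i * t%:C / 2.
have S2' := S2 HS.
have Scp : S cp.
  rewrite /cp; apply: (SD HS); first by apply: (SN HS); apply: (SV HS).
  by apply: (SQ HS).
have Scm : S cm.
  rewrite /cm; apply: (SB HS); first by apply: (SN HS); apply: (SV HS).
  by apply: (SQ HS).
have cm0 : cm != 0.
  apply/eqP=> h.
  have : cp + cm = -1 by rewrite /cp /cm; field.
  have -> : cp = cj cm by rewrite /cm /cp -cc cK.
  by rewrite h c0 addr0 => /eqP; rewrite eq_sym oppr_eq0 oner_eq0.
have [l0 [n0 E0]] := Hl i0.
have [l1 [n1 E1]] := Hl i1.
have [l2 [n2 E2]] := Hl i2.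
pose a j k := vec3 (w1 j) (w2 j) 1 k 0.
have Sa j k : S (a j k) by apply: S_vec3 => //; exact: S1.
have C0 k : M k i0 = l0 * a i0 k.
  have := congr1 (fun A : 'cV[R[i]]_3 => A k 0) E0; rewrite /bpt /= v3 !mxE /=.
  by move=> e; rewrite /a /= mxE -e; ring.
have C2 k : M k i2 = l1 * a i1 k.
  have := congr1 (fun A : 'cV[R[i]]_3 => A k 0) E1; rewrite /bpt /= v3 !mxE /=.
  by move=> e; rewrite /a /= mxE -e; ring.
have C1 k : M k i0 * cp + M k i1 + M k i2 = l2 * a i2 k.
  have := congr1 (fun A : 'cV[R[i]]_3 => A k 0) E2; rewrite /bpt /= v3 !mxE /=.
  by move=> e; rewrite /a /= mxE -e !mulr1.
pose h j m := w1 j + w2 j * cj (w2 m) + cj (w1 m).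
have Sh j m : S (h j m).
  exact: (SD HS (SD HS (Sw1 _) (SM HS (Sw2 _) (Sw2c _))) (Sw1c _)).
have Shc : S (cj (h i1 i2)).
  rewrite /h !cD cM !cK.
  exact: (SD HS (SD HS (Sw1c _) (SM HS (Sw2c _) (Sw2 _))) (Sw1 _)).
have H01 : l0 * cj l1 * h i0 i1 = 1.
  by have := HM (bpt t i0) (bpt t i1); rewrite E0 E1 hv b01.
have H02 : l0 * cj l2 * h i0 i2 = 1.
  by have := HM (bpt t i0) (bpt t i2); rewrite E0 E2 hv b02.
have H12 : l1 * cj l2 * h i1 i2 = cm.
  by have := HM (bpt t i1) (bpt t i2); rewrite E1 E2 hv b12.
have H12c : cj l1 * l2 * cj (h i1 i2) = cp.
  have -> : cp = cj cm by rewrite /cm /cp -cc cK.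
  by rewrite -H12 !cM cK; ring.
have hnz : h i1 i2 != 0.
  by apply/eqP => ee; move: cm0; rewrite -H12 ee mulr0 eqxx.
have hcnz : cj (h i1 i2) != 0.
  by apply/eqP => ee; move: hnz; rewrite -[h i1 i2]cK ee c0 eqxx.
pose r1 := cm * h i0 i2 / h i1 i2.
pose r2 := cp * h i0 i1 / cj (h i1 i2).
have Sr1 : S r1 := SQ HS (SM HS Scm (Sh _ _)) (Sh _ _).
have Sr2 : S r2 := SQ HS (SM HS Scp (Sh _ _)) Shc.
have L1 : l1 = l0 * r1.
  have e1 : l1 * h i1 i2 = cm * l0 * h i0 i2.
    rewrite -H12; transitivity (l1 * h i1 i2 * (l0 * cj l2 * h i0 i2)); first by rewrite H02 mulr1.
    ring.
  apply: (mulIf hnz); rewrite e1 /r1; by field; exact: hnz.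
have L2 : l2 = l0 * r2.
  have e2 : l2 * cj (h i1 i2) = cp * l0 * h i0 i1.
    rewrite -H12c; transitivity (l2 * cj (h i1 i2) * (l0 * cj l1 * h i0 i1)); first by rewrite H01 mulr1.
    ring.
  apply: (mulIf hcnz); rewrite e2 /r2; by field; exact: hcnz.
pose N := \matrix_(i, j) (M i j / l0).
have MN : M = l0 *: N.
  by apply/matrixP => i j; rewrite !mxE mulrC divfK.
have SN j k : S (N k j).
  rewrite mxE; case: (ord3 j) => [->|[->|->]].
  - by rewrite C0 mulrC mulrA mulVf // mul1r.
  - have -> : M k i1 / l0 = r2 * a i2 k - cp * a i0 k - r1 * a i1 k.
      have -> : M k i1 = l2 * a i2 k - M k i0 * cp - M k i2 by rewrite -C1; ring.
      by rewrite C0 C2 L1 L2; field; exact: n0.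
    apply: (SB HS); [apply: (SB HS) | ]; apply: (SM HS) => //.
  - have -> : M k i2 / l0 = r1 * a i1 k by rewrite C2 L1; field; exact: n0.
    by apply: (SM HS).
have e := detM; rewrite MN detZ in e.
have dN : \det N != 0.
  by apply/eqP => h0; move: e; rewrite h0 mulr0 => /eqP; rewrite eq_sym oner_eq0.
have L3 : l0 ^+ 3 = (\det N)^-1.
  by rewrite -[(\det N)^-1]mul1r -e mulrK // unitfE.
rewrite MN exprZn mxE L3; apply: (SM HS).
  by apply: (SV HS); apply: (S_det HS).
by apply: (S_exp HS).
Qed.
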